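(* Let $\lambda$ be a normalized additively alternating $n\times n$ complex matrix of rank $n-1$ with biresidue matrix $b$. Then a relevant weight $\mathbf w\in\mathbb{Z}^n$ is $\lambda$-Poisson-contributing if and only if $\mathbf w$ is a (complex) linear combination of the rows $b_{i\bullet}$ for those $i$ with $w_i=-1$. If, in addition, $\lambda$ is generic, this is equivalent to $\mathbf w$ being $q$-Hochschild-contributing for $q=\operatorname{EExp}(\lambda)$.
   Context: Additively alternating: $\lambda_{ij}=-\lambda_{ji}$; normalized: every row sums to $0$. The biresidue matrix of such $\lambda$ of rank $n-1$ is the unique normalized alternating matrix $b$ with $b|_\Delta=(\lambda|_\Delta)^{-1}$, where $\Delta=\{z\in\mathbb{C}^n:\sum_iz_i=0\}$ (which $\lambda$ maps to itself). $\operatorname{EExp}(\lambda)=(e^{\lambda_{ij}})$. A weight $\mathbf w$ is relevant if $w_i\ge-1$ for all $i$ and $\sum w_i=0$; $\lambda$-Poisson-contributing if $w_i\ge-1$ for all $i$ and $\sum_j\lambda_{ij}w_j=0$ for every $i$ with $w_i\ge0$; $q$-Hochschild-contributing if $w_i\ge-1$ for all $i$ and $\prod_jq_{ij}^{w_j}=1$ for every $i$ with $w_i\ge0$. $\lambda$ is generic if it has rank $n-1$ and every relevant $\operatorname{EExp}(\lambda)$-Hochschild-contributing weight is $\lambda$-Poisson-contributing. *)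

(* Defs.v *)
From mathcomp Require Import all_boot all_order all_algebra.
From mathcomp Require Import reals sequences exp trigo.
From mathcomp Require Export complex.
Set Implicit Arguments. Unset Strict Implicit. Unset Printing Implicit Defensive.
Import Order.TTheory GRing.Theory Num.Theory.
Local Open Scope ring_scope.

Section Defs.
Variable R : realType.
Local Notation C := (R[i]).
Variable n : nat.

Definition add_alternating (l : 'M[C]_n) : Prop :=
  forall i j, l i j = - l j i.

Definition normalized (l : 'M[C]_n) : Prop :=
  forall i, \sum_j l i j = 0.

Definition inDelta (z : 'cV[C]_n) : Prop := \sum_i z i 0 = 0.

Definition is_biresidue (l b : 'M[C]_n) : Prop :=
  [/\ add_alternating b, normalized b,
      (forall z, inDelta z -> b *m (l *m z) = z) &
      (forall z, inDelta z -> l *m (b *m z) = z)].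

Definition cexp (z : C) : C :=
  let: Complex x y := z in Complex (expR x * cos y) (expR x * sin y).

Definition EExp (l : 'M[C]_n) : 'M[C]_n := \matrix_(i, j) cexp (l i j).

Definition relevant (w : 'I_n -> int) : Prop :=
  (forall i, -1 <= w i) /\ \sum_i w i = 0.

Definition poisson_contributing (l : 'M[C]_n) (w : 'I_n -> int) : Prop :=
  (forall i, -1 <= w i) /\
  (forall i, 0 <= w i -> \sum_j l i j * (w j)%:~R = 0).

Definition hochschild_contributing (q : 'M[C]_n) (w : 'I_n -> int) : Prop :=
  (forall i, -1 <= w i) /\
  (forall i, 0 <= w i -> \prod_j (q i j) ^ (w j) = 1).

Definition generic (l : 'M[C]_n) : Prop :=
  \rank l = n.-1 /\
  (forall w, relevant w -> hochschild_contributing (EExp l) w ->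
             poisson_contributing l w).

Definition in_span_rows_minus1 (b : 'M[C]_n) (w : 'I_n -> int) : Prop :=
  exists c : 'I_n -> C,
    forall k, (w k)%:~R = \sum_(i | w i == -1) c i * b i k.

End Defs.

(* Main.v *)
Require Import Defs.
From mathcomp Require Import all_boot all_order all_algebra.
From mathcomp Require Import reals.
From mathcomp Require Import sequences exp trigo.
From mathcomp Require Import ring zify.
Import Order.TTheory GRing.Theory Num.Theory.
Local Open Scope ring_scope.

Lemma cexpD (R : realType) (a b : R[i]) : cexp (a + b) = cexp a * cexp b.
Proof.
case: a => x1 y1; case: b => x2 y2 /=.
rewrite expRD cosD sinD; congr Complex; ring.
Qed.

Lemma cexp0 (R : realType) : cexp (0 : R[i]) = 1.
Proof. by rewrite /= expR0 cos0 sin0 !mul1r. Qed.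

Lemma cexp_nat (R : realType) (z : R[i]) (m : nat) :
  cexp z ^+ m = cexp (m%:R * z).
Proof.
elim: m => [|m IH]; first by rewrite expr0 mul0r cexp0.
by rewrite exprS IH -cexpD mulrS mulrDl mul1r.
Qed.

Lemma cexpN (R : realType) (z : R[i]) : cexp (- z) = (cexp z)^-1.
Proof.
have nz : cexp z != 0.
  apply/eqP => h; have := @cexpD R (- z) z.
  by rewrite addNr cexp0 h mulr0; move/eqP; rewrite oner_eq0.
by apply/(mulIf nz); rewrite mulVf // -cexpD addNr cexp0.
Qed.

Lemma cexpz (R : realType) (z : R[i]) (k : int) :
  cexp z ^ k = cexp (k%:~R * z).
Proof.
case: k => m.
  by rewrite -exprnP cexp_nat.
rewrite NegzE -invr_expz -exprnP cexp_nat -cexpN.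
by rewrite rmorphN /= mulNr.
Qed.

Theorem proposition4p9 (R : realType) (n : nat) (l b : 'M[R[i]]_n) :
  add_alternating l -> normalized l -> \rank l = n.-1 ->
  is_biresidue l b ->
  forall w : 'I_n -> int, relevant w ->
    (poisson_contributing l w <-> in_span_rows_minus1 b w) /\
    (generic l -> (poisson_contributing l w <->
                   hochschild_contributing (EExp l) w)).
Proof.
move=> altl _ _ [altb normb blz lbz] w [wge wsum].
pose W : 'cV[R[i]]_n := \col_k (w k)%:~R.
have WD : inDelta W.
  rewrite /inDelta; under eq_bigr do rewrite mxE.
  by rewrite -rmorph_sum /= wsum.
have lWE : forall i, (l *m W) i 0 = \sum_j l i j * (w j)%:~R.
  by move=> i; rewrite mxE; apply: eq_bigr => j _; rewrite mxE.
have nonneg : forall i, w i != -1 -> 0 <= w i.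
  by move=> i /eqP h; have := wge i; lia.
split.
  split.
    move=> [_ Hp]; exists (fun i => - (l *m W) i 0) => k.
    move/matrixP: (blz W WD) => /(_ k 0); rewrite [W k 0]mxE => <-.
    rewrite mxE (bigID (fun i => w i == -1)) /=.
    rewrite [X in _ + X]big1 ?addr0; last first.
      by move=> i /nonneg /Hp h; rewrite lWE h mulr0.
    by apply: eq_bigr => i _; rewrite altb mulrC mulrN mulNr.
  move=> [c Hc]; split => // i wi0.
  pose c' : 'cV[R[i]]_n := \col_i (if w i == -1 then c i else 0).
  have Wc : W = - (b *m c').
    apply/matrixP => k j; rewrite (ord1 j) !mxE Hc big_mkcond -sumrN.
    apply: eq_bigr => i' _; rewrite mxE altb.
    by case: ifP => _; [rewrite mulrC mulNr | rewrite mulr0 oppr0].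
  have X0 : c'^T *m b *m c' = 0.
    have bT : b^T = - b by apply/matrixP => x y; rewrite !mxE altb.
    have h : (c'^T *m b *m c')^T = - (c'^T *m b *m c').
      by rewrite !trmx_mul trmxK bT mulNmx mulmxN mulmxA.
    have e : (c'^T *m b *m c')^T = c'^T *m b *m c'.
      by apply/matrixP => x y; rewrite (ord1 x) (ord1 y) mxE.
    rewrite e in h; move: h; move/eqP; rewrite -subr_eq0 opprK -mulr2n; move/eqP.
    move/matrixP => h; apply/matrixP => x y; move/eqP: (h x y).
    by rewrite !mxE -mulr2n mulrn_eq0 /= => /eqP.
  have c'D : inDelta c'.
    have : (c'^T *m W) 0 0 = 0.
      by rewrite Wc mulmxN mulmxA X0 oppr0 mxE.
    rewrite mxE /inDelta => h.
    suff -> : \sum_i c' i 0 = - \sum_j c'^T 0 j * W j 0 by rewrite h oppr0.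
    rewrite -sumrN; apply: eq_bigr => k _; rewrite !mxE.
    case: ifP => [/eqP -> | _]; last by rewrite mul0r oppr0.
    by rewrite mulrN1 opprK.
  have := lbz c' c'D; rewrite -[b *m c']opprK -Wc mulmxN => /eqP.
  rewrite eqr_oppLR => /eqP lW.
  move/matrixP: lW => /(_ i 0); rewrite lWE => ->.
  rewrite !mxE; case: ifP => [/eqP h|_]; last by rewrite oppr0.
  by move: wi0; rewrite h.
move=> [_ Hg]; split; last by apply: Hg.
move=> [wge' Hp]; split => // i /Hp H.
rewrite (eq_bigr (fun j => cexp ((w j)%:~R * l i j))); last first.
  by move=> j _; rewrite mxE cexpz.
rewrite -(big_morph _ (@cexpD R) (cexp0 R)).
by rewrite (eq_bigr (fun j => l i j * (w j)%:~R)) ?H ?cexp0 // => j _; rewrite mulrC.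
Qed.
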